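(* Let $(\mathfrak g,r)$ be a triangular Lie bialgebra such that $r:\mathfrak g^*\to\mathfrak g$ is invertible. For $\lambda_1,\lambda_2,\lambda_3,\lambda_4\in\mathbb R$ define $N=N_{\lambda_1,\lambda_2,\lambda_3,\lambda_4}:\mathcal D(\mathfrak g)\to\mathcal D(\mathfrak g)$ by $N(x,a^* )=(\lambda_1r(a^* )+\lambda_2x,\ \lambda_3r^{-1}(x)+\lambda_4a^* )$. Then $N$ is a Nijenhuis tensor on $\mathcal D(\mathfrak g)$: $[N(X),N(Y)]+N^2([X,Y])=N([N(X),Y]+[X,N(Y)])$ for all $X,Y\in\mathcal D(\mathfrak g)$.
   Context: $\mathfrak g$ a finite-dimensional real Lie algebra; $r\in\mathfrak g\otimes\mathfrak g$ identified with $r:\mathfrak g^*\to\mathfrak g$ via $\langle r(a^* ),b^*\rangle=\langle a^*\otimes b^*,r\rangle$. $(\mathfrak g,r)$ triangular means $r$ is skew-symmetric and satisfies the CYBE $[r_{12},r_{13}]+[r_{12},r_{23}]+[r_{13},r_{23}]=0$ (for $r=\sum a_i\otimes b_i$: $[r_{12},r_{13}]=\sum[a_i,a_j]\otimes b_i\otimes b_j$, $[r_{12},r_{23}]=\sum a_i\otimes[b_i,a_j]\otimes b_j$, $[r_{13},r_{23}]=\sum a_i\otimes a_j\otimes[b_i,b_j]$). Coadjoint action $\langle\mathrm{ad}^*(x)a^*,y\rangle=-\langle a^*,[x,y]\rangle$. Put $[a^*,b^*]_\delta=\mathrm{ad}^*(r(a^* ))b^*-\mathrm{ad}^*(r(b^*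 ))a^*$ on $\mathfrak g^*$ and, for $a^*\in\mathfrak g^*,x\in\mathfrak g$, $\langle\mathrm{ad}^*(a^* )x,b^*\rangle=-\langle x,[a^*,b^*]_\delta\rangle$. The Drinfeld double $\mathcal D(\mathfrak g)=\mathfrak g\oplus\mathfrak g^*$ has bracket $[(x,a^* ),(y,b^* )]=([x,y]+\mathrm{ad}^*(a^* )y-\mathrm{ad}^*(b^* )x,\ [a^*,b^*]_\delta+\mathrm{ad}^*(x)b^*-\mathrm{ad}^*(y)a^* )$. *)

(* Defs.v *)
(* A finite-dimensional Lie algebra g of dimension n over a
   real field R is represented in a basis e_0..e_(n-1): elements of g are row
   vectors 'rV[R]_n, elements of g^* are row vectors 'rV[R]_n in the dual basis,
   and the bracket is given by structure constants c i j k ([e_i,e_j] = sum_k c i j k e_k). *)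
From HB Require Import structures.
From mathcomp Require Import all_boot all_order all_algebra.
Set Implicit Arguments. Unset Strict Implicit. Unset Printing Implicit Defensive.
Import GRing.Theory Num.Theory.
Local Open Scope ring_scope.

Section Defs.
Variables (R : realFieldType) (n : nat).
Variable (c : 'I_n -> 'I_n -> 'I_n -> R).
Variable (r : 'M[R]_n).

Definition pair (a x : 'rV[R]_n) : R := \sum_(i < n) a 0 i * x 0 i.

Definition bvec (m : 'I_n) : 'rV[R]_n := delta_mx 0 m.

Definition lie (x y : 'rV[R]_n) : 'rV[R]_n :=
  \row_k \sum_(i < n) \sum_(j < n) x 0 i * y 0 j * c i j k.

Definition is_lie_algebra : Prop :=
  (forall x y, lie x y = - lie y x) /\
  (forall x y z, lie x (lie y z) + lie y (lie z x) + lie z (lie x y) = 0).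

(* r = sum_(i,j) r i j e_i (x) e_j ; as a map g^dual -> g : <r(a), b> = <a (x) b, r> *)
Definition rmap (a : 'rV[R]_n) : 'rV[R]_n := a *m r.

Definition skew : Prop := trmx r = - r.

(* coefficient of e_p (x) e_q (x) e_s in [r12,r13]+[r12,r23]+[r13,r23] *)
Definition CYBE_coef (p q s : 'I_n) : R :=
    \sum_(i < n) \sum_(k < n) r i q * r k s * c i k p
  + \sum_(j < n) \sum_(k < n) r p j * r k s * c j k q
  + \sum_(j < n) \sum_(l < n) r p j * r q l * c j l s.

Definition CYBE : Prop := forall p q s, CYBE_coef p q s = 0.

Definition triangular : Prop := is_lie_algebra /\ skew /\ CYBE.

Definition coad (x a : 'rV[R]_n) : 'rV[R]_n :=
  \row_m (- pair a (lie x (bvec m))).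

Definition brd (a b : 'rV[R]_n) : 'rV[R]_n :=
  coad (rmap a) b - coad (rmap b) a.

Definition coadd (a x : 'rV[R]_n) : 'rV[R]_n :=
  \row_m (- pair (brd a (bvec m)) x).

Definition dbl := ('rV[R]_n * 'rV[R]_n)%type.

Definition dbr (X Y : dbl) : dbl :=
  (lie X.1 Y.1 + coadd X.2 Y.1 - coadd Y.2 X.1,
   brd X.2 Y.2 + coad X.1 Y.2 - coad Y.1 X.2).

Definition Nmap (l1 l2 l3 l4 : R) (X : dbl) : dbl :=
  (l1 *: rmap X.2 + l2 *: X.1, l3 *: (X.1 *m invmx r) + l4 *: X.2).

End Defs.

(* Main.v *)
Require Import Defs.
From HB Require Import structures.
From mathcomp Require Import all_boot all_order all_algebra.
Set Implicit Arguments. Unset Strict Implicit. Unset Printing Implicit Defensive.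
Import GRing.Theory Num.Theory.
Local Open Scope ring_scope.

Definition adm (R : realFieldType) (n : nat) (c : 'I_n -> 'I_n -> 'I_n -> R)
  (x : 'rV[R]_n) : 'M[R]_n := \matrix_(j, k) \sum_(i < n) x 0 i * c i j k.

Lemma lieE (R : realFieldType) (n : nat) (c : 'I_n -> 'I_n -> 'I_n -> R) x y :
  lie c x y = y *m adm c x.
Proof.
apply/rowP => k; rewrite !mxE exchange_big; apply: eq_bigr => j _.
rewrite mxE mulr_sumr; apply: eq_bigr => i _.
by rewrite mulrA (mulrC (y 0 j)).
Qed.

Lemma coadE (R : realFieldType) (n : nat) (c : 'I_n -> 'I_n -> 'I_n -> R) x a :
  coad c x a = - (a *m (adm c x)^T).
Proof.
apply/rowP => m; rewrite !mxE /pair; congr (- _); apply: eq_bigr => k _.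
by rewrite lieE /bvec -rowE !mxE.
Qed.

Lemma pairE (R : realFieldType) (n : nat) (a x : 'rV[R]_n) :
  pair a x = (a *m x^T) 0 0.
Proof. by rewrite /pair !mxE; apply: eq_bigr => i _; rewrite mxE. Qed.

Lemma entryE (R : realFieldType) (n : nat) (u : 'rV[R]_n) m :
  u 0 m = (u *m (bvec R m)^T) 0 0.
Proof. by rewrite /bvec trmx_delta -colE mxE. Qed.

Lemma admD (R : realFieldType) (n : nat) (c : 'I_n -> 'I_n -> 'I_n -> R) x y :
  adm c (x + y) = adm c x + adm c y.
Proof.
apply/matrixP => j k; rewrite !mxE -big_split; apply: eq_bigr => i _.
by rewrite mxE mulrDl.
Qed.

Lemma coadDl (R : realFieldType) (n : nat) (c : 'I_n -> 'I_n -> 'I_n -> R) x y a :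
  coad c (x + y) a = coad c x a + coad c y a.
Proof. by rewrite !coadE admD linearD /= mulmxDr opprD. Qed.

Lemma coadDr (R : realFieldType) (n : nat) (c : 'I_n -> 'I_n -> 'I_n -> R) x a b :
  coad c x (a + b) = coad c x a + coad c x b.
Proof. by rewrite !coadE mulmxDl opprD. Qed.

Lemma coadZr (R : realFieldType) (n : nat) (c : 'I_n -> 'I_n -> 'I_n -> R) x k a :
  coad c x (k *: a) = k *: coad c x a.
Proof. by rewrite !coadE -scalemxAl scalerN. Qed.

Lemma rinvT (R : realFieldType) (n : nat) (r : 'M[R]_n) :
  r^T = - r -> r \in unitmx -> (invmx r)^T = - invmx r.
Proof.
move=> Hs Hu.
have H1 : r *m (invmx r)^T = - 1%:M.
  apply/eqP; rewrite -(inj_eq oppr_inj) opprK -mulNmx -Hs -trmx_mul.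
  by rewrite mulVmx // trmx1.
by rewrite -[(invmx r)^T](mulKmx Hu) H1 mulmxN mulmx1.
Qed.
Lemma swap14 (R : realFieldType) (n : nat) (F : 'I_n -> 'I_n -> 'I_n -> 'I_n -> R) :
  \sum_(a < n) \sum_(b < n) \sum_(c < n) \sum_(d < n) F a b c d =
  \sum_(d < n) \sum_(b < n) \sum_(c < n) \sum_(a < n) F a b c d.
Proof.
under eq_bigr => a _ do under eq_bigr => b _ do rewrite exchange_big.
under eq_bigr => a _ do rewrite exchange_big.
rewrite exchange_big.
under eq_bigr => d _ do rewrite exchange_big.
by under eq_bigr => d _ do under eq_bigr => b _ do rewrite exchange_big.
Qed.

Lemma Et1 (R : realFieldType) (n : nat) (c : 'I_n -> 'I_n -> 'I_n -> R) (r : 'M[R]_n) x y q :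
  (coad c (x *m r) y *m r) 0 q =
  - \sum_(p < n) \sum_(s < n) \sum_(i < n) \sum_(m < n)
      x 0 p * y 0 s * (r p i * c i m s * r m q).
Proof.
rewrite coadE mulNmx mxE; congr (- _).
rewrite mxE.
under eq_bigr => m _ do rewrite mxE mulr_suml.
under eq_bigr => m _ do under eq_bigr => s _ do rewrite !mxE mulr_sumr mulr_suml.
under eq_bigr => m _ do under eq_bigr => s _ do under eq_bigr => i _ do
  rewrite mxE mulr_suml mulr_sumr mulr_suml.
rewrite swap14; apply: eq_bigr => p _; apply: eq_bigr => s _;
  apply: eq_bigr => i _; apply: eq_bigr => m _.
by rewrite !mulrA (mulrC (y 0 s)).
Qed.

Lemma Et1f (R : realFieldType) (n : nat) (c : 'I_n -> 'I_n -> 'I_n -> R) (r : 'M[R]_n) x y q :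
  (coad c (x *m r) y *m r) 0 q =
  - \sum_(p < n) \sum_(s < n) x 0 p * y 0 s *
     (\sum_(i < n) \sum_(m < n) r p i * c i m s * r m q).
Proof.
rewrite Et1; congr (- _); apply: eq_bigr => p _; apply: eq_bigr => s _.
rewrite mulr_sumr; apply: eq_bigr => i _; by rewrite mulr_sumr.
Qed.

Lemma perm3412 (R : realFieldType) (n : nat) (F : 'I_n -> 'I_n -> 'I_n -> 'I_n -> R) :
  \sum_(a < n) \sum_(b < n) \sum_(c < n) \sum_(d < n) F a b c d =
  \sum_(c < n) \sum_(d < n) \sum_(a < n) \sum_(b < n) F a b c d.
Proof.
under eq_bigr => a _ do rewrite exchange_big.
rewrite exchange_big.
under eq_bigr => c _ do under eq_bigr => a _ do rewrite exchange_big.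
by under eq_bigr => c _ do rewrite exchange_big.
Qed.

Lemma Erhs (R : realFieldType) (n : nat) (c : 'I_n -> 'I_n -> 'I_n -> R) (r : 'M[R]_n) a b q :
  (lie c (a *m r) (b *m r)) 0 q =
  \sum_(p < n) \sum_(s < n) a 0 p * b 0 s *
     (\sum_(i < n) \sum_(j < n) r p i * r s j * c i j q).
Proof.
rewrite mxE.
under eq_bigr => i _ do under eq_bigr => j _ do rewrite !mxE mulr_suml mulr_suml.
under eq_bigr => i _ do under eq_bigr => j _ do under eq_bigr => p _ do
  rewrite mulr_sumr mulr_suml.
rewrite perm3412; apply: eq_bigr => p _; apply: eq_bigr => s _.
rewrite mulr_sumr; apply: eq_bigr => i _; rewrite mulr_sumr; apply: eq_bigr => j _.
by rewrite !mulrA [a 0 p * r p i * b 0 s]mulrAC.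
Qed.

Lemma skE (R : realFieldType) (n : nat) (r : 'M[R]_n) :
  Defs.skew r -> forall i j, r i j = - r j i.
Proof. by move=> Hs i j; have := congr1 (fun M : 'M_n => M j i) Hs; rewrite !mxE. Qed.

Lemma casE (R : realFieldType) (n : nat) (c : 'I_n -> 'I_n -> 'I_n -> R) :
  is_lie_algebra c -> forall i j k, c i j k = - c j i k.
Proof.
move=> [Ha _] i j k.
have cE : forall u v, (lie c (bvec R u) (bvec R v)) 0 k = c u v k.
  move=> u v; rewrite lieE /bvec -rowE !mxE (bigD1 u) //= mxE !eqxx mul1r.
  rewrite big1 ?addr0 // => i' /negbTE ne; by rewrite mxE ne andbF mul0r.
by rewrite -cE Ha mxE cE.
Qed.

Lemma cyb (R : realFieldType) (n : nat) (c : 'I_n -> 'I_n -> 'I_n -> R) (r : 'M[R]_n) :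
  is_lie_algebra c -> Defs.skew r -> CYBE c r -> forall p s q,
  \sum_(i < n) \sum_(j < n) r p i * r s j * c i j q =
  \sum_(i < n) \sum_(m < n) r s i * c i m p * r m q -
  \sum_(i < n) \sum_(m < n) r p i * c i m s * r m q.
Proof.
move=> Hl Hs Hc p s q.
have h := Hc p q s; rewrite /CYBE_coef in h.
have e1 : \sum_(i < n) \sum_(k < n) r i q * r k s * c i k p =
          \sum_(i < n) \sum_(m < n) r s i * c i m p * r m q.
  rewrite exchange_big; apply: eq_bigr => k _; apply: eq_bigr => i _.
  rewrite (skE Hs k s) (casE Hl i k p) !mulrN !mulNr opprK.
  by rewrite -mulrA mulrC.
have e2 : \sum_(j < n) \sum_(k < n) r p j * r k s * c j k q =
          - \sum_(i < n) \sum_(j < n) r p i * r s j * c i j q.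
  rewrite -sumrN; apply: eq_bigr => j _; rewrite -sumrN; apply: eq_bigr => k _.
  by rewrite (skE Hs k s) !mulrN !mulNr.
have e3 : \sum_(j < n) \sum_(l < n) r p j * r q l * c j l s =
          - \sum_(i < n) \sum_(m < n) r p i * c i m s * r m q.
  rewrite -sumrN; apply: eq_bigr => j _; rewrite -sumrN; apply: eq_bigr => l _.
  by rewrite (skE Hs q l) !mulrN !mulNr mulrAC.
rewrite e1 e2 e3 in h.
move: h.
set A := (X in X - _ - _ = 0); set B := (X in _ - X - _ = 0);
  set C := (X in _ - _ - X = 0) => h.
by apply/eqP; rewrite eq_sym -subr_eq0 addrAC h.
Qed.

Lemma Hhom (R : realFieldType) (n : nat) (c : 'I_n -> 'I_n -> 'I_n -> R) (r : 'M[R]_n) :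
  is_lie_algebra c -> Defs.skew r -> CYBE c r -> forall a b,
  brd c r a b *m r = lie c (a *m r) (b *m r).
Proof.
move=> Hl Hs Hc a b; apply/rowP => q.
rewrite /brd /rmap mulmxBl mxE.
have -> : forall M : 'rV[R]_n, (- M) 0 q = - M 0 q by move=> M; rewrite mxE.
rewrite Et1f Et1f Erhs opprK.
rewrite [X in _ + X]exchange_big /=.
rewrite -sumrN -big_split /=; apply: eq_bigr => p _.
rewrite -sumrN -big_split /=; apply: eq_bigr => s _.
by rewrite (cyb Hl Hs Hc) (mulrC (b 0 s)) mulrBr addrC.
Qed.

Lemma E1 (R : realFieldType) (n : nat) (c : 'I_n -> 'I_n -> 'I_n -> R) (r : 'M[R]_n) :
  is_lie_algebra c -> Defs.skew r -> CYBE c r -> r \in unitmx -> forall x y,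
  lie c x y = (coad c x (y *m invmx r) - coad c y (x *m invmx r)) *m r.
Proof.
move=> Hl Hs Hc Hu x y.
by have := Hhom Hl Hs Hc (x *m invmx r) (y *m invmx r); rewrite /brd /rmap !mulmxKV.
Qed.

Lemma trN (R : realFieldType) m k (M : 'M[R]_(m, k)) : (- M)^T = - M^T.
Proof. by apply/matrixP => i j; rewrite !mxE. Qed.

Lemma tr00 (R : realFieldType) (M : 'M[R]_1) : M 0 0 = M^T 0 0.
Proof. by rewrite mxE. Qed.

Lemma E2 (R : realFieldType) (n : nat) (c : 'I_n -> 'I_n -> 'I_n -> R) (r : 'M[R]_n) :
  is_lie_algebra c -> Defs.skew r -> CYBE c r -> r \in unitmx -> forall a y,
  coadd c r a y = coad c (a *m r) (y *m invmx r) *m r.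
Proof.
move=> Hl Hs Hc Hu a y; apply/rowP => m.
rewrite mxE pairE -[brd c r a _](mulmxK Hu) Hhom // lieE.
rewrite [RHS]entryE [RHS]tr00 coadE !trmx_mul trN !trmx_mul (rinvT Hs Hu) Hs !trmxK.
rewrite !mulmxN !mulNmx !mulmxN opprK !mulmxA.
by rewrite [RHS]mxE.
Qed.
Lemma pairD (R : realFieldType) (n : nat) (a b c d : 'rV[R]_n) :
  ((a, b) : dbl R n) + (c, d) = (a + c, b + d).
Proof. by []. Qed.
Lemma pairN (R : realFieldType) (n : nat) (a b : 'rV[R]_n) :
  - ((a, b) : dbl R n) = (- a, - b).
Proof. by []. Qed.

Lemma pairB (R : realFieldType) (n : nat) (a b c d : 'rV[R]_n) :
  ((a, b) : dbl R n) - (c, d) = (a - c, b - d).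
Proof. by []. Qed.

Lemma grp1 (V : zmodType) (P Q S T : V) : P - Q + S - T = P + S - (Q + T).
Proof. by rewrite opprD !addrA [P - Q + S]addrAC. Qed.

Lemma grp2 (V : zmodType) (P Q S T : V) : S - T + P - Q = P + S - (Q + T).
Proof. by rewrite opprD addrA [S - T + P]addrAC [S + P]addrC [LHS]addrAC. Qed.

Definition Lmap (R : realFieldType) (n : nat) (c : 'I_n -> 'I_n -> 'I_n -> R)
  (r : 'M[R]_n) (X Y : dbl R n) : dbl R n :=
  (coad c (X.1 + X.2 *m r) (Y.1 *m invmx r) *m r, coad c (X.1 + X.2 *m r) Y.2).

Lemma Ldec (R : realFieldType) (n : nat) (c : 'I_n -> 'I_n -> 'I_n -> R) (r : 'M[R]_n) :
  is_lie_algebra c -> Defs.skew r -> CYBE c r -> r \in unitmx -> forall X Y,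
  dbr c r X Y = Lmap c r X Y - Lmap c r Y X.
Proof.
move=> Hl Hs Hc Hu [x a] [y b]; rewrite /dbr /Lmap /= pairB; congr (_, _).
  rewrite (E1 Hl Hs Hc Hu) !(E2 Hl Hs Hc Hu) !coadDl !mulmxDl ?mulmxBl.
  by rewrite mulNmx grp1.
by rewrite /brd /rmap !coadDl grp2.
Qed.

Lemma Lcomm (R : realFieldType) (n : nat) (c : 'I_n -> 'I_n -> 'I_n -> R) (r : 'M[R]_n)
  (l1 l2 l3 l4 : R) :
  r \in unitmx -> forall X Y,
  Lmap c r X (Nmap r l1 l2 l3 l4 Y) = Nmap r l1 l2 l3 l4 (Lmap c r X Y).
Proof.
move=> Hu [x a] [y b]; rewrite /Lmap /Nmap /rmap /=; congr (_, _).
  rewrite mulmxDl -!scalemxAl (mulmxK Hu) coadDr !coadZr mulmxDl -!scalemxAl.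
  by [].
by rewrite coadDr !coadZr (mulmxK Hu).
Qed.

Lemma ND (R : realFieldType) (n : nat) (r : 'M[R]_n) (l1 l2 l3 l4 : R) (U V : dbl R n) :
  Nmap r l1 l2 l3 l4 (U + V) = Nmap r l1 l2 l3 l4 U + Nmap r l1 l2 l3 l4 V.
Proof.
case: U => u a; case: V => v b; rewrite pairD /Nmap /rmap /= pairD; congr (_, _).
  by rewrite mulmxDl !scalerDr addrACA.
by rewrite mulmxDl !scalerDr addrACA.
Qed.

Lemma NN (R : realFieldType) (n : nat) (r : 'M[R]_n) (l1 l2 l3 l4 : R) (U : dbl R n) :
  Nmap r l1 l2 l3 l4 (- U) = - Nmap r l1 l2 l3 l4 U.
Proof.
case: U => u a; rewrite pairN /Nmap /rmap /= pairN; congr (_, _).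
  by rewrite mulNmx !scalerN opprD.
by rewrite mulNmx !scalerN opprD.
Qed.

Lemma grp3 (V : zmodType) (a b c d : V) : a - b + (d - c) = a - c + (d - b).
Proof. by rewrite addrACA [- b + _]addrC addrACA. Qed.

Theorem lemma4p8 (R : realFieldType) (n : nat)
    (c : 'I_n -> 'I_n -> 'I_n -> R) (r : 'M[R]_n)
    (Htri : triangular c r) (Hinv : r \in unitmx)
    (l1 l2 l3 l4 : R) (X Y : dbl R n) :
  let N := Nmap r l1 l2 l3 l4 in
  let br := dbr c r in
  br (N X) (N Y) + N (N (br X Y)) = N (br (N X) Y + br X (N Y)).
Proof.
case: Htri => Hl [Hs Hc] N br.
have Ld := Ldec Hl Hs Hc Hinv.
rewrite /br !Ld /N !(@Lcomm _ _ c r l1 l2 l3 l4 Hinv) ?ND ?NN ?ND ?NN.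
exact: grp3.
Qed.
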